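(* Let $S$ be a state of a $d$-dimensional Hegselmann–Krause system with social network $G=(V,E)$ and confidence bound $\varepsilon>0$, with influence network $(V,E_I)$, and let $e=\{u,w\}\in E_I$ with $x_u\ne x_w$. Let $\bar S_e$ be the projected state along $e$. Then: (1) $\|x_u-x_w\|_2=|\bar x_u-\bar x_w|$; (2) $N_v=\bar N_v$ for every $v\in V$; (3) $\sum_{v\in V}|N_v|\,\|m_v\|_2\ \ge\ \sum_{v\in V}|\bar N_v|\,|\bar m_v|$.
   Context: A $d$-dimensional Hegselmann–Krause system has a finite undirected graph $G=(V,E)$ (social network), a confidence bound $\varepsilon>0$, and a state given by positions $x_v\in\mathbb{R}^d$, $v\in V$. In a state, the influencing neighborhood of $v$ is $N_v=\{u:\{u,v\}\in E,\ \|x_u-x_v\|_2\le\varepsilon\}\cup\{v\}$, the movement of $v$ is $m_v=\frac{1}{|N_v|}\sum_{u\in N_v}(x_u-x_v)$, and the influence network is $(V,E_I)$ with $E_I=\{\{u,v\}\in E:\|x_u-x_v\|_2\le\varepsilon\}$. For an edge $e=\{u,w\}\in E_I$, let $p=(x_u-x_w)/\|x_u-x_w\|_2$ (the order of $u,w$ chosen arbitrarily). The projected state $\bar S_e$ is the state of the $1$-dimensional HKS with social network $(V,E_I)$, the same confidence bound $\varepsilon$, and positions $\bar x_v=x_v^\top p\in\mathbb{R}$. In $\bar S_e$, $\bar N_v=\{u:\{u,v\}\in E_I,\ |\bar x_u-\bar x_v|\le\varepsilon\}\cup\{v\}$ and $\bar m_v=\frac{1}{|\bar N_v|}\sum_{u\in\bar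 N_v}(\bar x_u-\bar x_v)$. *)

(* Defs.v *)
From HB Require Import structures.
From mathcomp Require Import all_boot all_order all_algebra.
From mathcomp Require Import reals.
Set Implicit Arguments. Unset Strict Implicit. Unset Printing Implicit Defensive.
Import Order.TTheory GRing.Theory Num.Theory.
Local Open Scope ring_scope.

Section HKS.
Variables (R : realType) (d : nat) (V : finType).

Definition dotv (a b : 'rV[R]_d) : R := \sum_(i < d) a 0 i * b 0 i.
Definition norm2 (a : 'rV[R]_d) : R := Num.sqrt (\sum_(i < d) (a 0 i) ^+ 2).

Variables (E : rel V) (eps : R) (x : V -> 'rV[R]_d).

Definition infl_edge : rel V := fun u v => E u v && (norm2 (x u - x v) <= eps).

Definition nbhd (v : V) : {set V} := [set u | infl_edge u v || (u == v)].

Definition move (v : V) : 'rV[R]_d :=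
  (#|nbhd v|%:R)^-1 *: \sum_(u in nbhd v) (x u - x v).

End HKS.

Section HKS1.
Variables (R : realType) (V : finType) (E : rel V) (eps : R) (y : V -> R).

Definition nbhd1 (v : V) : {set V} :=
  [set u | (E u v && (`|y u - y v| <= eps)) || (u == v)].

Definition move1 (v : V) : R :=
  (#|nbhd1 v|%:R)^-1 * \sum_(u in nbhd1 v) (y u - y v).

End HKS1.

(* projected state along the edge {u,w}: positions x_v^T p, p = (x_u-x_w)/||x_u-x_w||;
   its social network is the influence network E_I. *)
Definition proj_dir (R : realType) (d : nat) (V : finType) (x : V -> 'rV[R]_d)
  (u w : V) : 'rV[R]_d := (norm2 (x u - x w))^-1 *: (x u - x w).

Definition proj_pos (R : realType) (d : nat) (V : finType) (x : V -> 'rV[R]_d)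
  (u w : V) (v : V) : R := dotv (x v) (proj_dir x u w).

(* Main.v *)
Require Import Defs.
From HB Require Import structures.
From mathcomp Require Import all_boot all_order all_algebra.
From mathcomp Require Import reals ring lra.
Import Order.TTheory GRing.Theory Num.Theory.
Local Open Scope ring_scope.

Section Aux.
Variables (R : realType) (d : nat).

Lemma lagrange (a b : 'I_d -> R) :
  (\sum_i a i * b i) ^+ 2 <= (\sum_i a i ^+ 2) * (\sum_i b i ^+ 2).
Proof.
rewrite -subr_ge0.
have H : \sum_i \sum_j (a i * b j - a j * b i) ^+ 2 =
  2 * ((\sum_i a i ^+ 2) * (\sum_i b i ^+ 2) - (\sum_i a i * b i) ^+ 2).
  have E1 : \sum_i \sum_j (a i * b j - a j * b i) ^+ 2 =
    \sum_i \sum_j (a i ^+ 2 * b j ^+ 2 - 2 * (a i * b i * (a j * b j)))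
    + \sum_i \sum_j (a j ^+ 2 * b i ^+ 2).
    rewrite -big_split /=; apply: eq_bigr => i _.
    rewrite -big_split /=; apply: eq_bigr => j _; ring.
  rewrite E1 [X in _ + X]exchange_big /= -big_split /=.
  have -> : (\sum_i a i ^+ 2) * (\sum_i b i ^+ 2) = \sum_i \sum_j (a i ^+ 2 * b j ^+ 2).
    by rewrite big_distrl; apply: eq_bigr => i _; rewrite big_distrr.
  have -> : (\sum_i a i * b i) ^+ 2 = \sum_i \sum_j (a i * b i * (a j * b j)).
    by rewrite expr2 big_distrl; apply: eq_bigr => i _; rewrite big_distrr.
  rewrite -sumrB mulr_sumr; apply: eq_bigr => i _.
  rewrite -big_split -sumrB mulr_sumr; apply: eq_bigr => j _ /=; ring.
have : 0 <= \sum_i \sum_j (a i * b j - a j * b i) ^+ 2.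
  by apply: sumr_ge0 => i _; apply: sumr_ge0 => j _; exact: sqr_ge0.
rewrite H pmulr_rge0 //.
Qed.

Lemma cs (a b : 'rV[R]_d) : `|dotv a b| <= norm2 a * norm2 b.
Proof.
rewrite /norm2 /dotv -sqrtrM; last by apply: sumr_ge0 => i _; exact: sqr_ge0.
rewrite -sqrtr_sqr ler_sqrt; last first.
  by apply: mulr_ge0; apply: sumr_ge0 => i _; exact: sqr_ge0.
exact: (lagrange (fun i => a 0 i) (fun i => b 0 i)).
Qed.

Lemma dotvB (a b c : 'rV[R]_d) : dotv (a - b) c = dotv a c - dotv b c.
Proof.
rewrite /dotv -sumrB; apply: eq_bigr => i _; rewrite !mxE; ring.
Qed.

Lemma dotvZ (k : R) (a c : 'rV[R]_d) : dotv (k *: a) c = k * dotv a c.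
Proof.
rewrite /dotv mulr_sumr; apply: eq_bigr => i _; rewrite !mxE; ring.
Qed.

Lemma dotvZr (k : R) (a c : 'rV[R]_d) : dotv a (k *: c) = k * dotv a c.
Proof.
rewrite /dotv mulr_sumr; apply: eq_bigr => i _; rewrite !mxE; ring.
Qed.

Lemma dotv_sum (V : finType) (S : {set V}) (f : V -> 'rV[R]_d) c :
  dotv (\sum_(i in S) f i) c = \sum_(i in S) dotv (f i) c.
Proof.
rewrite /dotv; under eq_bigr => j _ do rewrite summxE big_distrl.
exact: exchange_big.
Qed.

Lemma norm2_sq (a : 'rV[R]_d) : norm2 a ^+ 2 = \sum_(i < d) (a 0 i) ^+ 2.
Proof. by rewrite /norm2 sqr_sqrtr //; apply: sumr_ge0 => i _; exact: sqr_ge0. Qed.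

Lemma norm2_eq0 (a : 'rV[R]_d) : norm2 a = 0 -> a = 0.
Proof.
move=> h; have : \sum_(i < d) (a 0 i) ^+ 2 = 0 by rewrite -norm2_sq h expr0n.
move/psumr_eq0P => h2; apply/rowP => i; rewrite mxE.
by apply/eqP; rewrite -sqrf_eq0; apply/eqP; apply: h2 => // j _; exact: sqr_ge0.
Qed.

End Aux.

Theorem lemma1 (R : realType) (d : nat) (V : finType) (E : rel V) (eps : R)
  (x : V -> 'rV[R]_d) (u w : V) :
  symmetric E -> 0 < eps ->
  infl_edge E eps x u w -> x u != x w ->
  [/\ norm2 (x u - x w) = `|proj_pos x u w u - proj_pos x u w w|,
      (forall v : V,
         nbhd E eps x v = nbhd1 (infl_edge E eps x) eps (proj_pos x u w) v) &
      \sum_(v : V) #|nbhd1 (infl_edge E eps x) eps (proj_pos x u w) v|%:R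
                    * `|move1 (infl_edge E eps x) eps (proj_pos x u w) v|
      <= \sum_(v : V) #|nbhd E eps x v|%:R * norm2 (move E eps x v)].
Proof.
move=> _ _ _ hne.
set n := norm2 (x u - x w).
have n0 : n != 0.
  apply/eqP => /norm2_eq0 /eqP; rewrite subr_eq0; exact/negP.
have nge : 0 <= n by rewrite /n /norm2 sqrtr_ge0.
have np : norm2 (proj_dir x u w) = 1.
  rewrite /proj_dir -/n /norm2.
  have -> : \sum_(i < d) ((n^-1 *: (x u - x w)) 0 i) ^+ 2
     = n^-2 * \sum_(i < d) ((x u - x w) 0 i) ^+ 2.
    by rewrite mulr_sumr; apply: eq_bigr => i _; rewrite mxE exprMn exprVn.
  by rewrite -norm2_sq -/n mulVf ?sqrtr1 // expf_neq0.
have csp a : `|dotv a (proj_dir x u w)| <= norm2 a.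
  by have := @cs _ _ a (proj_dir x u w); rewrite np mulr1.
have pp a b : proj_pos x u w a - proj_pos x u w b = dotv (x a - x b) (proj_dir x u w).
  by rewrite /proj_pos dotvB.
have part2 : forall v, nbhd E eps x v = nbhd1 (infl_edge E eps x) eps (proj_pos x u w) v.
  move=> v; apply/setP => z; rewrite !inE.
  case h: (infl_edge E eps x z v) => //=.
  rewrite pp (le_trans (csp _)) //.
  by move: h; rewrite /infl_edge => /andP [].
split => //.
- rewrite pp /proj_dir dotvZr /dotv.
  rewrite (_ : \sum_(i < d) _ = n ^+ 2); last first.
    by rewrite norm2_sq; apply: eq_bigr => i _; rewrite expr2.
  by rewrite expr2 mulKf // ger0_norm.
- apply: ler_sum => v _; rewrite -part2.
  apply: ler_wpM2l => //.
  rewrite /move1 -part2.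
  have -> : (#|nbhd E eps x v|%:R^-1 *
     \sum_(u0 in nbhd E eps x v) (proj_pos x u w u0 - proj_pos x u w v))
     = dotv (move E eps x v) (proj_dir x u w).
    rewrite /move dotvZ dotv_sum; congr (_ * _).
    by apply: eq_bigr => z _; rewrite pp.
  exact: csp.
Qed.
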